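(* Every nonempty open subset $U\subset \mathbb{R}^{\mathbb{N}}$ satisfies $\mu(U)=\infty$.
   Context: $\mathbb{R}^{\mathbb{N}}$ carries the product topology. Let $\mathcal{B}$ be the Borel $\sigma$-algebra of $\mathbb{R}$, $\lambda$ the Lebesgue measure, and $\mathcal{B}_{\infty}$ the $\sigma$-algebra on $\mathbb{R}^{\mathbb{N}}$ generated by the cylinder sets $\prod_{i=1}^{m}C_{i}\times\prod_{i=m+1}^{\infty}\mathbb{R}$ with $C_i\in\mathcal{B}$, $m\in\mathbb{N}$ (equal to the Borel $\sigma$-algebra of the product topology). Let $\mathcal{F}(\mathcal{B},\lambda)$ be the set of finite rectangles $\prod_{i\in\mathbb{N}}C_{i}$ with $C_i\in\mathcal{B}$ and $\prod_{i}\lambda(C_i)\in[0,\infty)$, with $\mathrm{vol}(\prod_{i}C_i):=\prod_i\lambda(C_i)$. The measure $\mu$ is the restriction to $\mathcal{B}_{\infty}$ of the outer measure $\mu^{\ast}(A):=\inf\{\sum_{n}\mathrm{vol}(\mathscr{C}_{n}) : \mathscr{C}_{n}\in\mathcal{F}(\mathcal{B},\lambda),\ A\subset\bigcup_{n}\mathscr{C}_{n}\}$ ($\inf\varnothing=\infty$). *)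

(* Defs.v *)
From HB Require Import structures.
From mathcomp Require Import all_boot all_order all_algebra.
From mathcomp Require Import all_classical all_reals all_analysis.
Set Implicit Arguments. Unset Strict Implicit. Unset Printing Implicit Defensive.
Import Order.TTheory GRing.Theory Num.Theory.
Local Open Scope classical_set_scope.
Local Open Scope ring_scope.
Local Open Scope ereal_scope.

Section LebesgueRN.
Variable R : realType.

Definition lam : set R -> \bar R := (@lebesgue_measure R).

Definition rect (C : nat -> set R) : set (nat -> R) :=
  [set x | forall i, C i (x i)].

Definition pprod (C : nat -> set R) (n : nat) : \bar R :=
  \prod_(i < n) lam (C i).

Definition finite_rect (C : nat -> set R) : Prop :=
  (forall i, measurable (C i)) /\ exists r : R, pprod C @ \oo --> r%:E.

Definition vol (C : nat -> set R) : \bar R := lim (pprod C @ \oo).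

(* outer measure mu^* ; ereal_inf set0 = +oo *)
Definition mu_star (A : set (nat -> R)) : \bar R :=
  ereal_inf [set s | exists C : nat -> nat -> set R,
     (forall n, finite_rect (C n)) /\
     A `<=` \bigcup_n rect (C n) /\
     s = \sum_(0 <= n <oo) vol (C n)].

(* mu is the restriction of mu^* to B_infty; on B_infty it coincides with mu^* *)
Definition mu (A : set (nat -> R)) : \bar R := mu_star A.

End LebesgueRN.

(* Main.v *)
Require Import Defs.
From HB Require Import structures.
From mathcomp Require Import all_boot all_order all_algebra.
From mathcomp Require Import all_classical all_reals all_analysis.
From mathcomp Require Import lra.
Import numFieldTopology.Exports.
Import Order.TTheory GRing.Theory Num.Theory.
Local Open Scope classical_set_scope.
Local Open Scope ereal_scope.

Section Aux.
Variable R : realType.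

Lemma lamT : lam [set: R] = +oo.
Proof.
rewrite /lam -set_itvNyy lebesgue_measure_itv /=.
by [].
Qed.

Lemma lam_ge0 (A : set R) : 0 <= lam A.
Proof. exact: measure_ge0. Qed.

Lemma avoid (S T : set R) : measurable S -> measurable T -> lam S < lam T ->
  exists y, T y /\ ~ S y.
Proof.
move=> mS mT lt; apply: contrapT => h.
have sub : T `<=` S.
  by move=> y Ty; apply: contrapT => nS; apply: h; exists y.
have := le_measure (@lebesgue_measure R) (mem_set mT) (mem_set mS) sub.
by rewrite -/(lam T) -/(lam S) leNgt lt.
Qed.

Lemma classify (C : nat -> set R) : finite_rect C ->
  (exists j, lam (C j) = 0) \/ (forall b, exists i, (b <= i)%N /\ lam (C i) < +oo).
Proof.
move=> [mC [r hr]].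
case: (pselect (exists j, lam (C j) = 0)) => [h|h]; [by left|right].
move=> b; apply: contrapT => hb.
have inf : forall i, (b <= i)%N -> lam (C i) = +oo.
  move=> i bi; have := leey (lam (C i)); rewrite le_eqVlt => /orP [/eqP ->//|lt].
  by exfalso; apply: hb; exists i.
have pos : forall i, 0 < lam (C i).
  move=> i; rewrite lt_neqAle lam_ge0 andbT; apply/negP => /eqP e.
  by apply: h; exists i.
have ppos : forall n, 0 < pprod C n.
  elim=> [|n IH]; first by rewrite /pprod big_ord0.
  by rewrite /pprod big_ord_recr /= mule_gt0.
have eq : forall n, (b < n)%N -> pprod C n = +oo.
  case=> // n bn; rewrite /pprod big_ord_recr /= (inf n) //.
  by rewrite gt0_muley //; exact: (ppos n).
have h2 : pprod C @ \oo --> +oo.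
  apply: cvg_near_cst; exists b.+1 => // n /= hn; exact: eq.
have := cvg_unique (@ereal_hausdorff R) hr h2.
move=> e. have {}e := e ltac:(apply: fmap_proper_filter; typeclasses eauto). by [] || discriminate || (case: e). Qed.

Definition kseq (g : nat * nat -> nat) (m : nat) : nat -> nat :=
  fix k n := match n with 0 => g (0%N, m) | S n' => g (S n', (k n').+1) end.


Lemma kseq0 g m : kseq g m 0 = g (0%N, m). Proof. by []. Qed.
Lemma kseqS g m n : kseq g m n.+1 = g (n.+1, (kseq g m n).+1). Proof. by []. Qed.

Lemma kseq_ge g m : (forall p, (p.2 <= g p)%N) -> forall n, (m <= kseq g m n)%N.
Proof.
move=> hg; elim=> [|n IH]; first by rewrite kseq0; exact: (hg (0%N, m)).
rewrite kseqS; apply: leq_trans (hg (n.+1, (kseq g m n).+1)) => /=.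
exact: leqW.
Qed.

Lemma kseq_lt g m : (forall p, (p.2 <= g p)%N) ->
  forall n1 n2, (n1 < n2)%N -> (kseq g m n1 < kseq g m n2)%N.
Proof.
move=> hg n1; elim=> [//|n2 IH].
rewrite ltnS leq_eqVlt => /orP [/eqP ->|lt].
  by rewrite kseqS; exact: (hg (n2.+1, (kseq g m n2).+1)).
apply: ltn_trans (IH lt) _.
by rewrite kseqS; exact: (hg (n2.+1, (kseq g m n2).+1)).
Qed.

Lemma kseq_inj g m : (forall p, (p.2 <= g p)%N) -> injective (kseq g m).
Proof.
move=> hg n1 n2 e; case: (ltngtP n1 n2) => // h.
  by have := kseq_lt g m hg _ _ h; rewrite e ltnn.
by have := kseq_lt g m hg _ _ h; rewrite e ltnn.
Qed.

Lemma kseq_form g m n : exists b, kseq g m n = g (n, b).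
Proof. by case: n => [|n]; [exists m | exists (kseq g m n).+1]. Qed.

Lemma nocover (x0 : nat -> R) (m : nat) (C : nat -> nat -> set R) :
  (forall n, finite_rect (C n)) ->
  exists x : nat -> R, (forall i, (i < m)%N -> `|x i - x0 i| < m.+1%:R^-1)%R /\
    forall n, ~ rect (C n) x.
Proof.
move=> fC.
have mC : forall n i, measurable (C n i) by move=> n i; exact: (fC n).1 i.
pose A n := ~ exists j, lam (C n j) = 0.
have hA : forall n, A n -> forall b, exists i, (b <= i)%N /\ lam (C n i) < +oo.
  by move=> n an; case: (classify _ (fC n)) => // hn; exfalso; exact: an hn.
have [j hj] : {j : nat -> nat & forall n, ~ A n -> lam (C n (j n)) = 0}.
  apply: (@choice _ _ (fun n jj => ~ A n -> lam (C n jj) = 0)) => n; case: (pselect (A n)) => an.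
    by exists 0%N.
  have [jj hjj] : exists j, lam (C n j) = 0 by apply: contrapT.
  by exists jj.
have [g hg] : {g : nat * nat -> nat & forall p, (p.2 <= g p)%N /\
    (A p.1 -> lam (C p.1 (g p)) < +oo)}.
  apply: (@choice _ _ (fun p gp => (p.2 <= gp)%N /\ (A p.1 -> lam (C p.1 gp) < +oo))) => -[n b]; case: (pselect (A n)) => an.
    by have [i [bi hi]] := hA n an b; exists i.
  by exists b.
pose k := kseq g m.
have hg1 : forall p, (p.2 <= g p)%N by move=> p; exact: (hg p).1.
have kge : forall n, (m <= k n)%N := kseq_ge g m hg1.
have kinj : injective k := kseq_inj g m hg1.
have kfin : forall n, A n -> lam (C n (k n)) < +oo.
  move=> n an; have [b kb] := kseq_form g m n.
  rewrite /k kb; exact: (hg (n, b)).2.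
pose Zn n i := [set y | (~ A n /\ j n = i) /\ C n i y].
pose Z i := \bigcup_n Zn n i.
pose An i := [set y | exists n, A n /\ k n = i /\ C n i y].
have Zn_prop : forall n i, measurable (Zn n i) /\ lam (Zn n i) = 0.
  move=> n i; case: (pselect (~ A n /\ j n = i)) => c.
    have -> : Zn n i = C n i.
      by apply/seteqP; split => y /=; [case | split].
    by split; [exact: mC | case: c => c1 <-; exact: hj].
  have -> : Zn n i = set0 by apply/seteqP; split => y //= [].
  by split; [exact: measurable0 | exact: measure0].
have mZ : forall i, measurable (Z i).
  by move=> i; apply: bigcupT_measurable => n; exact: (Zn_prop n i).1.
have Z0 : forall i, lam (Z i) = 0.
  move=> i; apply/eqP; rewrite eq_le lam_ge0 andbT.
  apply: le_trans (measure_sigma_subadditive (@lebesgue_measure R)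
     (fun n => (Zn_prop n i).1) (mZ i) (@subset_refl _ _)) _.
  by rewrite eseries0 // => n _ _; exact: (Zn_prop n i).2.
have An_prop : forall i, measurable (An i) /\ lam (An i) < +oo /\
    ((i < m)%N -> An i = set0).
  move=> i; case: (pselect (exists n, A n /\ k n = i)) => [[n0 [a0 e0]]|c].
    have -> : An i = C n0 i.
      apply/seteqP; split => y /=.
        case=> n [an [en cy]].
        by have := kinj n n0 (etrans en (esym e0)) => en0; rewrite -en0.
      by move=> cy; exists n0.
    split; first exact: mC.
    split; first by rewrite -e0; exact: kfin.
    by move=> im; have := kge n0; rewrite e0 leqNgt im.
  have -> : An i = set0.
    by apply/seteqP; split => y //= [n [an [en _]]]; apply: c; exists n.
  split; [exact: measurable0 | split; [by rewrite /lam measure0 | by []]].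
pose e : R := (m.+1%:R^-1)%R.
have e0 : (0 < e)%R by rewrite invr_gt0 ltr0n.
pose T i := if (i < m)%N then `](x0 i - e)%R, (x0 i + e)%R[ else [set: R].
have hx : forall i, exists y, T i y /\ ~ (Z i `|` An i) y.
  move=> i; apply: avoid.
  - apply: measurableU; [exact: mZ | exact: (An_prop i).1].
  - rewrite /T; case: ifP => _; [exact: measurable_itv | exact: measurableT].
  - apply: (le_lt_trans (measureU2 (@lebesgue_measure R) (mZ i) (An_prop i).1)).
    rewrite /T; case: ifP => im.
      rewrite (An_prop i).2.2 // measure0 adde0.
      apply: (@le_lt_trans _ _ 0).
        by move: (Z0 i) => /eqP; rewrite eq_le => /andP[].
      rewrite /lam lebesgue_measure_itv /= lte_fin ifT; last by lra.
      by rewrite -EFinD lte_fin; lra.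
    apply: (@le_lt_trans _ _ (0 + lam (An i))).
      apply: leeD => //.
      by move: (Z0 i) => /eqP; rewrite eq_le => /andP[].
    rewrite add0e lamT; exact: (An_prop i).2.1.
have [x hx'] := choice hx.
exists x; split.
  move=> i im; have := (hx' i).1; rewrite /T im /= in_itv /= => /andP [h1 h2].
  rewrite ltr_norml; apply/andP; split; rewrite -/e; lra.
move=> n hn; case: (pselect (A n)) => an.
  apply: (hx' (k n)).2; right; exists n; split=> //; split=> //; exact: hn.
apply: (hx' (j n)).2; left; exists n => //; split => //; exact: hn.
Qed.

End Aux.

(* R^N = {ptws nat -> R}: nat -> R with the product topology *)
Theorem theoremA7 (R : realType) (U : set {ptws nat -> R}) :
  open U -> U !=set0 -> mu (U : set (nat -> R)) = +oo.
Proof.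
move=> oU [x0 Ux0].
rewrite /mu /mu_star.
set S := (X in ereal_inf X).
suff -> : S = set0 by rewrite ereal_inf0.
apply/seteqP; split => // s [C [fC [cov _]]]; exfalso.
have hX : forall m, exists x : nat -> R,
    (forall i, (i < m)%N -> `|x i - x0 i| < m.+1%:R^-1)%R /\
    forall n, ~ rect (C n) x.
  by move=> m; exact: nocover.
have [X hX'] := choice hX.
have cvgX : X @ \oo --> (x0 : {ptws nat -> R}).
  apply/pointwise_cvgP => i.
  suff : (fun m => X m i) @ \oo --> x0 i by [].
  apply/cvgrPdist_lt => eps eps0.
  near=> m.
  have im : (i < m)%N by near: m; exists i.+1.
  rewrite distrC; apply: lt_trans ((hX' m).1 i im) _.
  near: m; exact: (near_infty_natSinv_lt (PosNum eps0)).
have nU : nbhs (x0 : {ptws nat -> R}) U by apply: open_nbhs_nbhs; split.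
have [N _ HN] := cvgX U nU.
have [n _ hn] := cov _ (HN N (leqnn N)).
exact: (hX' N).2 n hn.
Unshelve. all: by end_near.
Qed.
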